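(* For any integer $n\ge3$, with $P_n$ and $C_n$ the path and cycle of order $n$, $$\gamma_{(2,2,1)}(C_n)=\gamma_{(2,2,1)}(P_n)=\begin{cases} n-\lfloor n/7\rfloor+1 & \text{if } n\equiv1,2\pmod 7,\\ n-\lfloor n/7\rfloor & \text{otherwise.}\end{cases}$$
   Context: $N(v)$ is the open neighbourhood. $\gamma_{(2,2,1)}(G)$ is the minimum of $\sum_v f(v)$ over functions $f:V(G)\to\{0,1,2\}$ such that $\sum_{u\in N(v)}f(u)\ge 2$ whenever $f(v)\in\{0,1\}$ and $\sum_{u\in N(v)}f(u)\ge1$ whenever $f(v)=2$. *)

(* Defs.v *)
From mathcomp Require Import all_boot.
Set Implicit Arguments. Unset Strict Implicit. Unset Printing Implicit Defensive.

(* A simple graph on a finite vertex type T is given by a symmetric,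
   irreflexive adjacency relation e : rel T; the open neighbourhood of v
   is [pred u | e v u]. *)

Definition nbsum (T : finType) (e : rel T) (f : {ffun T -> 'I_3}) (v : T) : nat :=
  \sum_(u | e v u) (f u : nat).

Definition is_221_fun (T : finType) (e : rel T) (f : {ffun T -> 'I_3}) : bool :=
  [forall v, ((f v <= 1) ==> (2 <= nbsum e f v)) && ((f v == 2 :> nat) ==> (1 <= nbsum e f v))].

Definition weight (T : finType) (f : {ffun T -> 'I_3}) : nat := \sum_v (f v : nat).

(* gamma_(2,2,1)(G): minimum weight of a (2,2,1)-function.
   (The default value 2*|V| is an upper bound on every weight, so it does not
   affect the minimum whenever some (2,2,1)-function exists.) *)
Definition gamma221 (T : finType) (e : rel T) : nat :=
  \big[minn/(#|T|.*2)]_(f : {ffun T -> 'I_3} | is_221_fun e f) weight f.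

Definition path_rel (n : nat) : rel 'I_n :=
  fun i j => (i.+1 == j :> nat) || (j.+1 == i :> nat).

(* Cycle C_n on vertices 0..n-1 (a simple cycle for n >= 3). *)
Definition cycle_rel (n : nat) : rel 'I_n :=
  fun i j => (j == i.+1 %% n :> nat) || (i == j.+1 %% n :> nat).

Arguments path_rel n i j : clear implicits.
Arguments cycle_rel n i j : clear implicits.

(* Main.v *)
Require Import Defs.
From mathcomp Require Import all_boot zify.
Set Implicit Arguments. Unset Strict Implicit. Unset Printing Implicit Defensive.

Definition ok3 (l x r : nat) : bool := if x <= 1 then 2 <= l + r else 1 <= l + r.

Fixpoint inner_ok (s : seq nat) : bool :=
  match s with
  | x :: ((y :: z :: _) as t) => ok3 x y z && inner_ok t
  | _ => true
  end.

Definition idx (x0 x1 a b : nat) := x0 * 27 + x1 * 9 + a * 3 + b.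
Definition get (t : seq nat) x0 x1 a b := nth 0 t (idx x0 x1 a b).
Definition mm t x0 x1 a b x2 := get t x1 (if ok3 x0 x1 x2 then x2 else 2) a b.
Definition F t x0 x1 a b := x0 + minn (mm t x0 x1 a b 0) (minn (mm t x0 x1 a b 1) (mm t x0 x1 a b 2)).
Definition step t := mkseq (fun i => F t (i %/ 27) (i %/ 9 %% 3) (i %/ 3 %% 3) (i %% 3)) 81.
Definition base := mkseq (fun i =>
  if (i %/ 27 == i %/ 3 %% 3) && (i %/ 9 %% 3 == i %% 3) then i %/ 27 + i %/ 9 %% 3 else 1000) 81.
Definition tab k := iter k step base.

Definition val n := n - n %/ 7 + (if (n %% 7 == 1) || (n %% 7 == 2) then 1 else 0).
Definition cond i := ok3 (i %% 3) (i %/ 27) (i %/ 9 %% 3) && ok3 (i %/ 3 %% 3) (i %% 3) (i %/ 27).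
Definition check k := all (fun i => cond i ==> (val k.+2 <= nth 0 (tab k) i)) (iota 0 81).

Lemma checks_ok : all check (iota 1 13).
Proof. vm_compute. reflexivity. Qed.

Lemma per_ok : tab 14 = map (addn 6) (tab 7).
Proof. vm_compute. reflexivity. Qed.

Lemma dec x0 x1 a b : x0 <= 2 -> x1 <= 2 -> a <= 2 -> b <= 2 ->
  [/\ idx x0 x1 a b %/ 27 = x0, idx x0 x1 a b %/ 9 %% 3 = x1,
      idx x0 x1 a b %/ 3 %% 3 = a & idx x0 x1 a b %% 3 = b].
Proof.
case: x0 => [|[|[|?]]] //; case: x1 => [|[|[|?]]] //;
case: a => [|[|[|?]]] //; case: b => [|[|[|?]]] // => *; split; reflexivity.
Qed.

Lemma idx_lt x0 x1 a b : x0 <= 2 -> x1 <= 2 -> a <= 2 -> b <= 2 -> idx x0 x1 a b < 81.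
Proof. rewrite /idx; lia. Qed.

Lemma size_tab k : size (tab k) = 81.
Proof. by case: k => [|k]; rewrite /tab ?iterS size_mkseq. Qed.

Lemma get_step t x0 x1 a b : x0 <= 2 -> x1 <= 2 -> a <= 2 -> b <= 2 ->
  get (step t) x0 x1 a b = F t x0 x1 a b.
Proof.
move=> h0 h1 h2 h3; rewrite /get /step nth_mkseq; last exact: idx_lt.
by case: (dec h0 h1 h2 h3) => -> -> -> ->.
Qed.

Lemma get_base x0 x1 a b : x0 <= 2 -> x1 <= 2 -> a <= 2 -> b <= 2 ->
  get base x0 x1 a b = if (x0 == a) && (x1 == b) then x0 + x1 else 1000.
Proof.
move=> h0 h1 h2 h3; rewrite /get /base nth_mkseq; last exact: idx_lt.
by case: (dec h0 h1 h2 h3) => -> -> -> ->.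
Qed.

Lemma ok3_2 x0 x1 : ok3 x0 x1 2.
Proof. rewrite /ok3; case: ifP => _; lia. Qed.

Lemma lb k : forall s, size s = k.+2 -> all (fun x => x <= 2) s -> inner_ok s ->
  get (tab k) (nth 0 s 0) (nth 0 s 1) (nth 0 s k) (nth 0 s k.+1) <= sumn s.
Proof.
elim: k => [|k IH].
  case=> [|x0 [|x1 [|x2 t]]] //= _ /and3P [h0 h1 _] _.
  by rewrite /tab /= get_base // !eqxx /= addn0.
case=> [|x0 [|x1 [|x2 t]]] //=.
move=> [sz] /and4P [h0 h1 h2 ht] /andP [ok ok'].
  have hall : all (fun x => x <= 2) [:: x1, x2 & t] by rewrite /= h1 h2 ht.
  have H := IH [:: x1, x2 & t] ltac:(by rewrite /= sz) hall ok'.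
  have ha : nth 0 [:: x1, x2 & t] k <= 2.
    by apply: (allP hall); apply: mem_nth; rewrite /= sz; lia.
  have hb : nth 0 [:: x1, x2 & t] k.+1 <= 2.
    by apply: (allP hall); apply: mem_nth; rewrite /= sz; lia.
  rewrite [tab _]/= -/(tab k) get_step //=.
  rewrite /F leq_add2l.
  rewrite /mm.
  move: ok H h2; case: x2 {hall ok' ht ha hb} => [|[|[|?]]] // ok H _; rewrite ok.
  + exact: leq_trans (geq_minl _ _) H.
  + exact: leq_trans (leq_trans (geq_minr _ _) (geq_minl _ _)) H.
  + exact: leq_trans (leq_trans (geq_minr _ _) (geq_minr _ _)) H.
Qed.
Lemma tabS k : tab k.+1 = step (tab k).
Proof. by []. Qed.
Lemma shift0 x0 x1 a b : x0 <= 2 -> x1 <= 2 -> a <= 2 -> b <= 2 ->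
  get (tab 14) x0 x1 a b = get (tab 7) x0 x1 a b + 6.
Proof.
move=> h0 h1 h2 h3.
rewrite per_ok /get (nth_map 0); first by rewrite addnC.
rewrite size_tab; exact: idx_lt.
Qed.
Opaque tab step get.
Lemma shift j x0 x1 a b : x0 <= 2 -> x1 <= 2 -> a <= 2 -> b <= 2 ->
  get (tab (7 + j + 7)) x0 x1 a b = get (tab (7 + j)) x0 x1 a b + 6.
Proof.
elim: j x0 x1 a b => [|j IH] x0 x1 a b h0 h1 h2 h3.
  exact: shift0.
have -> : 7 + j.+1 + 7 = (7 + j + 7).+1 by lia.
have -> : 7 + j.+1 = (7 + j).+1 by lia.
rewrite [tab (7 + j + 7).+1]tabS [tab (7 + j).+1]tabS !get_step // /F /mm.
have E : forall y, y <= 2 -> get (tab (7 + j + 7)) x1 y a b = get (tab (7 + j)) x1 y a b + 6.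
  by move=> y hy; apply: IH.
rewrite !E; try by case: ifP.
by rewrite -!addn_minl addnA.
Qed.
Lemma per q r x0 x1 a b : x0 <= 2 -> x1 <= 2 -> a <= 2 -> b <= 2 ->
  get (tab (7 + r + 7 * q)) x0 x1 a b = get (tab (7 + r)) x0 x1 a b + 6 * q.
Proof.
move=> h0 h1 h2 h3; elim: q => [|q IH]; first by rewrite muln0 !addn0.
have -> : 7 + r + 7 * q.+1 = 7 + (r + 7 * q) + 7 by lia.
by rewrite shift // addnA IH mulnS; lia.
Qed.

Lemma val_per m q : val (m + 7 * q) = val m + 6 * q.
Proof.
rewrite /val (addnC m) (mulnC 7) modnMDl divnMDl //.
have : m %/ 7 <= m by apply: leq_div.
lia.
Qed.

Lemma check_get k x0 x1 a b : check k -> x0 <= 2 -> x1 <= 2 -> a <= 2 -> b <= 2 ->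
  ok3 b x0 x1 -> ok3 a b x0 -> val k.+2 <= get (tab k) x0 x1 a b.
Proof.
move=> /allP C h0 h1 h2 h3 c1 c2.
have := C (idx x0 x1 a b); rewrite mem_iota /= add0n idx_lt //; move/(_ isT).
by rewrite /cond; case: (dec h0 h1 h2 h3) => -> -> -> ->; rewrite c1 c2.
Qed.

Lemma final_bound k x0 x1 a b : 0 < k -> x0 <= 2 -> x1 <= 2 -> a <= 2 -> b <= 2 ->
  ok3 b x0 x1 -> ok3 a b x0 -> val k.+2 <= get (tab k) x0 x1 a b.
Proof.
move=> k0 h0 h1 h2 h3 c1 c2.
have Hc : forall k, 0 < k < 14 -> check k.
  move=> k' hk; apply: (allP checks_ok); rewrite mem_iota; lia.
case: (ltnP k 14) => hk; first by apply: check_get => //; apply: Hc; lia.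
pose q := (k - 7) %/ 7; pose r := (k - 7) %% 7.
have -> : k = 7 + r + 7 * q by rewrite /q /r; have := divn_eq (k - 7) 7; lia.
rewrite per //.
have -> : (7 + r + 7 * q).+2 = (7 + r).+2 + 7 * q by lia.
rewrite val_per; have : val (7 + r).+2 <= get (tab (7 + r)) x0 x1 a b.
  apply: check_get => //; apply: Hc; rewrite /r; have := ltn_pmod (k - 7) (isT : 0 < 7); lia.
lia.
Qed.

Section G.
Variable n : nat.

Definition S (f : {ffun 'I_n -> 'I_3}) := [seq (f i : nat) | i <- enum 'I_n].

Lemma size_S f : size (S f) = n.
Proof. by rewrite size_map size_enum_ord. Qed.

Lemma S_nth f (o : 'I_n) : nth 0 (S f) o = f o.
Proof. by rewrite (nth_map o) ?nth_ord_enum // size_enum_ord. Qed.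

Lemma S_all f : all (fun x => x <= 2) (S f).
Proof. by apply/allP => x /mapP [i _ ->]; rewrite -ltnS ltn_ord. Qed.

Lemma weight_S f : weight f = sumn (S f).
Proof. by rewrite sumnE big_map big_enum /weight. Qed.

Lemma sum_at (s : seq nat) j : size s = n ->
  \sum_(u : 'I_n | nat_of_ord u == j) nth 0 s u = nth 0 s j.
Proof.
move=> sz; case: (ltnP j n) => hj.
  by rewrite (big_pred1 (Ordinal hj)).
rewrite nth_default ?sz //; apply: big1 => u /eqP E; have := ltn_ord u; lia.
Qed.

Lemma sum_split (P Q : pred 'I_n) (F : 'I_n -> nat) :
  (forall u, ~~ (P u && Q u)) ->
  \sum_(u | P u || Q u) F u = \sum_(u | P u) F u + \sum_(u | Q u) F u.
Proof.
move=> H; rewrite big_mkcond [X in _ = X + _]big_mkcond [X in _ = _ + X]big_mkcond -big_split.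
apply: eq_bigr => u _; have := H u; case: (P u); case: (Q u) => //= _; by rewrite ?addn0.
Qed.

Lemma nbsum_path f (v : 'I_n) : nbsum (path_rel n) f v =
  nth 0 (S f) v.+1 + (if nat_of_ord v is k.+1 then nth 0 (S f) k else 0).
Proof.
rewrite /nbsum /path_rel.
rewrite (eq_bigr (fun u : 'I_n => nth 0 (S f) u)); last by move=> u _; rewrite S_nth.
rewrite (eq_bigl (fun u : 'I_n => (nat_of_ord u == v.+1) || ((nat_of_ord u).+1 == v))); last first.
  by move=> u; rewrite eq_sym.
rewrite sum_split; last by move=> u; apply/negP => /andP [/eqP -> /eqP]; lia.
rewrite sum_at ?size_S //; congr (_ + _).
case: v => [[|k] hk] /=.
  by rewrite big_pred0.
by rewrite (eq_bigl (fun u : 'I_n => nat_of_ord u == k)) ?sum_at ?size_S.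
Qed.

Hypothesis n3 : 3 <= n.

Lemma modS u : u < n -> u.+1 %% n = if u.+1 == n then 0 else u.+1.
Proof. by move=> hu; case: eqP => [->|ne]; rewrite ?modnn // modn_small //; lia. Qed.

Definition nxt (v : nat) := if v.+1 == n then 0 else v.+1.
Definition prv (v : nat) := if v is k.+1 then k else n.-1.

Lemma nbsum_cycle f (v : 'I_n) : nbsum (cycle_rel n) f v =
  nth 0 (S f) (nxt v) + nth 0 (S f) (prv v).
Proof.
rewrite /nbsum /cycle_rel.
rewrite (eq_bigr (fun u : 'I_n => nth 0 (S f) u)); last by move=> u _; rewrite S_nth.
rewrite (eq_bigl (fun u : 'I_n => (nat_of_ord u == nxt v) || (nat_of_ord u == prv v))); last first.
  move=> u; rewrite !modS ?ltn_ord // /nxt /prv; congr orb.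
  have := ltn_ord u; have := ltn_ord v.
  move: (nat_of_ord v) (nat_of_ord u) => a b.
  case: a => [|k] ha hb; case: (eqVneq b.+1 n) => E; rewrite ?E ?(negbTE E) /=;
    apply/idP/idP => /eqP H; apply/eqP; move: E => /eqP E; lia.
rewrite (@sum_split (fun u : 'I_n => nat_of_ord u == nxt v) (fun u : 'I_n => nat_of_ord u == prv v)); last first.
  move=> u; apply/negP => /andP [/eqP -> /eqP]; rewrite /nxt /prv.
  have := ltn_ord v; case: (nat_of_ord v) => [|k]; case: eqP; lia.
by rewrite !sum_at ?size_S.
Qed.

End G.

Lemma inner_of s : (forall i, i.+2 < size s -> ok3 (nth 0 s i) (nth 0 s i.+1) (nth 0 s i.+2)) ->
  inner_ok s.
Proof.
elim: s => [|x s IH] //; case: s IH => [|y [|z t]] IH H //=.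
apply/andP; split; first exact: (H 0).
by apply: IH => i hi; apply: (H i.+1).
Qed.

Lemma inner_to s : inner_ok s ->
  forall i, i.+2 < size s -> ok3 (nth 0 s i) (nth 0 s i.+1) (nth 0 s i.+2).
Proof.
elim: s => [|x s IH] //; case: s IH => [|y [|z t]] IH //= /andP [h1 h2] [|i] //= hi.
exact: IH.
Qed.

Lemma ok3E l x r : x <= 2 ->
  ok3 l x r = ((x <= 1) ==> (2 <= l + r)) && ((x == 2) ==> (1 <= l + r)).
Proof. by case: x => [|[|[|x]]] // _; rewrite /ok3 /= ?andbT. Qed.

Lemma cyc_lb n (f : {ffun 'I_n -> 'I_3}) : 3 <= n -> is_221_fun (cycle_rel n) f -> val n <= weight f.
Proof.
move=> n3 /forallP H.
have Hv : forall v : 'I_n, ok3 (nth 0 (S f) (prv n v)) (nth 0 (S f) v) (nth 0 (S f) (nxt n v)).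
  move=> v; rewrite S_nth ok3E; last by rewrite -ltnS ltn_ord.
  by rewrite addnC -nbsum_cycle.
have Hall := S_all f.
have Hle : forall i, nth 0 (S f) i <= 2.
  move=> i; case: (ltnP i n) => hi; last by rewrite nth_default ?size_S.
  by apply: (allP Hall); apply: mem_nth; rewrite size_S.
rewrite weight_S.
case: n n3 f H Hv Hall Hle => [|[|k]] // n3 f H Hv Hall Hle.
have hk : 0 < k by lia.
apply: leq_trans (lb (size_S f) Hall _).
  apply: final_bound => //.
  - have := Hv (Ordinal (isT : 0 < k.+2)).
    by rewrite /nxt /prv /=.
  - have := Hv (Ordinal (ltnSn k.+1)).
    by rewrite /nxt /prv /= eqxx.
apply: inner_of => i; rewrite size_S => hi.
have := Hv (Ordinal (ltnW hi)).
rewrite /nxt /prv /=.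
by have -> : (i.+2 == k.+2) = false by apply/negbTE; lia.
Qed.

Definition pok s := inner_ok (0 :: s ++ [:: 0]).
Definition block := [:: 0; 2; 1; 0; 1; 2; 0].

Lemma pok_block s : s != [::] -> pok s -> pok (block ++ s).
Proof.
by case: s => [|x s] // _; rewrite /pok /= => ->.
Qed.

Lemma path_list n : 3 <= n -> exists s, [/\ size s = n, all (fun x => x <= 2) s, pok s & sumn s = val n].
Proof.
elim: n {-2}n (leqnn n) => [|m IH] n hn n3; first by lia.
case: (leqP n 9) => h9.
  case: n hn n3 h9 => [|[|[|[|[|[|[|[|[|[|n]]]]]]]]]] // _ _ _.
  - by exists [:: 0; 2; 1].
  - by exists [:: 0; 2; 2; 0].
  - by exists [:: 0; 2; 1; 2; 0].
  - by exists [:: 0; 2; 1; 0; 1; 2].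
  - by exists [:: 0; 2; 1; 0; 1; 2; 0].
  - by exists [:: 0; 2; 1; 0; 1; 2; 2; 0].
  - by exists [:: 0; 2; 1; 0; 1; 2; 0; 1; 2].
have [s [sz sa sp ss]] := IH (n - 7) ltac:(lia) ltac:(lia).
exists (block ++ s); split.
- by rewrite size_cat sz /=; lia.
- by rewrite all_cat sa.
- apply: pok_block => //; apply/eqP => E; move: sz; rewrite E /=; lia.
- rewrite sumn_cat ss /=.
  have -> : n = (n - 7) + 7 * 1 by lia.
  by rewrite val_per addnK; lia.
Qed.

Lemma nth_pad (s : seq nat) j : nth 0 (s ++ [:: 0]) j = nth 0 s j.
Proof.
rewrite nth_cat; case: ltnP => // h.
by rewrite [RHS]nth_default //; case: (j - size s) => [|[|]].
Qed.

Lemma ok3C l x r : ok3 l x r = ok3 r x l.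
Proof. by rewrite /ok3 addnC. Qed.

Lemma path_valid n (f : {ffun 'I_n -> 'I_3}) : pok (S f) -> is_221_fun (path_rel n) f.
Proof.
move=> P; apply/forallP => v.
have hv : v.+2 < size (0 :: S f ++ [:: 0]).
  by rewrite /= size_cat size_S addn1; have := ltn_ord v; lia.
have O := inner_to P hv.
have E := S_nth f v.
have Hl : nth 0 (S f) v <= 2 by rewrite E -ltnS ltn_ord.
rewrite nbsum_path -E -ok3E //.
move: O; rewrite /= !nth_pad.
by case: v {hv E Hl} => [[|k] hk] /=; rewrite ?nth_pad ok3C.
Qed.

Lemma path_cycle n (f : {ffun 'I_n -> 'I_3}) : is_221_fun (path_rel n) f -> is_221_fun (cycle_rel n) f.
Proof.
have M : forall v, nbsum (path_rel n) f v <= nbsum (cycle_rel n) f v.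
  move=> v; rewrite /nbsum big_mkcond [X in _ <= X]big_mkcond /=.
  apply: leq_sum => u _; rewrite /path_rel /cycle_rel.
  case: (boolP ((v.+1 == u :> nat) || (u.+1 == v :> nat))) => // /orP [/eqP E|/eqP E].
    by rewrite modn_small ?E ?eqxx // ltn_ord.
  have -> : u.+1 %% n = u.+1 by rewrite modn_small // E ltn_ord.
  by rewrite E eqxx orbT.
move=> /forallP H; apply/forallP => v; have := H v.
case/andP => h1 h2; apply/andP; split; apply/implyP => hv.
  exact: leq_trans (implyP h1 hv) (M v).
exact: leq_trans (implyP h2 hv) (M v).
Qed.

Lemma of_list n (s : seq nat) : size s = n -> all (fun x => x <= 2) s ->
  exists f : {ffun 'I_n -> 'I_3}, S f = s.
Proof.
move=> sz sa; exists [ffun i : 'I_n => inord (nth 0 s i) : 'I_3].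
apply: (eq_from_nth (x0 := 0)); rewrite size_S // => i hi.
rewrite -[i]/(nat_of_ord (Ordinal hi)) S_nth ffunE inordK //.
rewrite ltnS; apply: (allP sa); apply: mem_nth; by rewrite sz.
Qed.

Lemma bigmin_le (T : finType) (P : pred T) (w : T -> nat) d x :
  P x -> \big[minn/d]_(y | P y) w y <= w x.
Proof.
move=> Px; have : x \in index_enum T by rewrite mem_index_enum.
elim: (index_enum T) => [|a r IH] //; rewrite inE big_cons => /orP [/eqP <-|xr].
  by rewrite Px geq_minl.
case: (P a); last exact: IH.
exact: leq_trans (geq_minr _ _) (IH xr).
Qed.

Lemma bigmin_ge (T : finType) (P : pred T) (w : T -> nat) d v :
  v <= d -> (forall y, P y -> v <= w y) -> v <= \big[minn/d]_(y | P y) w y.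
Proof.
move=> hd H; elim/big_ind: _ => //.
  by move=> a b ha hb; rewrite leq_min ha hb.
Qed.

Theorem proposition30 (n : nat) : 3 <= n ->
  let val := n - n %/ 7 + (if (n %% 7 == 1) || (n %% 7 == 2) then 1 else 0) in
  gamma221 (cycle_rel n) = val /\ gamma221 (path_rel n) = val.
Proof.
move=> n3.
change (gamma221 (cycle_rel n) = val n /\ gamma221 (path_rel n) = val n).
have [s [sz sa sp ss]] := path_list n3.
have [f0 Ef] := of_list sz sa.
have P0 : is_221_fun (path_rel n) f0 by apply: path_valid; rewrite Ef.
have C0 := path_cycle P0.
have W0 : weight f0 = val n by rewrite weight_S Ef.
have Vd : val n <= #|'I_n|.*2.
  rewrite card_ord -addnn /val; have := leq_div n 7; case: ifP => _; lia.
split; apply/eqP; rewrite eqn_leq; apply/andP; split.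
- by rewrite -W0; apply: bigmin_le.
- by apply: bigmin_ge => // f Hf; apply: cyc_lb.
- by rewrite -W0; apply: bigmin_le.
- by apply: bigmin_ge => // f Hf; apply: cyc_lb => //; apply: path_cycle.
Qed.
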